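(* Let $G$ be a group, $X$ a $G$-bornological coarse space and $A,B$ invariant subsets of $X$ with $A\cup B=X$. Assume that the square of inclusions $$\begin{array}{ccc}A\cap B&\to&A\\ \downarrow&&\downarrow\\ B&\to&X\end{array}$$ (all subsets with the induced structures) is a push-out in the category $G\mathbf{BC}$ of $G$-bornological coarse spaces, that $A$ and $A\cap B$ are nice in $X$, and that $V[A]\cap B$ is nice in $X$ for a cofinal family of invariant coarse entourages $V$ of $X$. Then the pair $(A,B)$ is coarsely excisive.
   Context: A bornological coarse space is a set with a coarse structure (entourages containing the diagonal, closed under subsets, finite unions, inverses and composition) and a compatible bornology ($U[B]$ bounded for entourages $U$ and bounded $B$); morphisms are controlled and proper maps. A $G$-bornological coarse space is one with an action of $G$ by automorphisms such that the invariant entourages are cofinal in the coarse structure. For an entourage $U$ and a subset $C$, $U[C]=\{x\mid \exists c\in C: (x,c)\in U\}$. A subset $C$ of $X$ is nice if for every invariant coarse entourage $U$ of $X$ containing the diagonal the inclusion $C\to U[C]$ (induced structures) is a coarse equivalence. A pair $(A,B)$ of invariant subsets with $A\cup B=X$ is coarsely excisive if $A$ and $A\cap B$ are nice in $X$, $V[A]\cap B$ is nice in $X$ for a cofinal family of invariant entourages $V$ of $X$, and for every coarse entourage $U$ of $X$ there exists a coarse entourage $V$ with $U[A]\cap U[B]\subseteq V[A\cap B]$. *)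

(* Defs.v *)
From Stdlib Require Import ProofIrrelevance.
Set Implicit Arguments.
Unset Strict Implicit.

Record Group := {
  gcar :> Type;
  gmul : gcar -> gcar -> gcar;
  gone : gcar;
  ginv : gcar -> gcar;
  gmulA : forall a b c, gmul a (gmul b c) = gmul (gmul a b) c;
  gmul1 : forall a, gmul gone a = a;
  gmulV : forall a, gmul (ginv a) a = gone }.

Definition rel (T : Type) := T -> T -> Prop.
Definition diag (T : Type) : rel T := fun x y => x = y.
Definition rinv (T : Type) (U : rel T) : rel T := fun x y => U y x.
Definition rcomp (T : Type) (U V : rel T) : rel T :=
  fun x z => exists y, U x y /\ V y z.
Definition runion (T : Type) (U V : rel T) : rel T := fun x y => U x y \/ V x y.
Definition rsub (T : Type) (U V : rel T) := forall x y, U x y -> V x y.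
Definition thicken (T : Type) (U : rel T) (C : T -> Prop) : T -> Prop :=
  fun x => exists c, C c /\ U x c.
Definition cap (T : Type) (A B : T -> Prop) : T -> Prop := fun x => A x /\ B x.
Definition rimage (T T' : Type) (f : T -> T') (U : rel T) : rel T' :=
  fun x' y' => exists x y, U x y /\ f x = x' /\ f y = y'.

Record is_coarse_structure (T : Type) (C : rel T -> Prop) : Prop := {
  cs_diag : C (@diag T);
  cs_sub : forall U V, rsub U V -> C V -> C U;
  cs_union : forall U V, C U -> C V -> C (runion U V);
  cs_inv : forall U, C U -> C (rinv U);
  cs_comp : forall U V, C U -> C V -> C (rcomp U V) }.

Record is_bornology (T : Type) (B : (T -> Prop) -> Prop) : Prop := {
  b_empty : B (fun _ => False);
  b_pt : forall x, B (fun y => y = x);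
  b_sub : forall P Q, (forall x, P x -> Q x) -> B Q -> B P;
  b_union : forall P Q, B P -> B Q -> B (fun x => P x \/ Q x) }.

Definition invariant_rel (G : Group) (T : Type) (act : G -> T -> T) (V : rel T) :=
  forall (g : G) x y, V x y -> V (act g x) (act g y).

(** G-bornological coarse spaces: bornological coarse space with a G-action
    by automorphisms (each [act g] controlled and proper; its inverse is
    [act (ginv g)]) such that invariant entourages are cofinal. *)
Record GBC (G : Group) := {
  car :> Type;
  act : G -> car -> car;
  coarse : rel car -> Prop;
  born : (car -> Prop) -> Prop;
  coarse_ax : is_coarse_structure coarse;
  born_ax : is_bornology born;
  compat : forall U P, coarse U -> born P -> born (thicken U P);
  act_one : forall x, act (@gone G) x = x;
  act_mul : forall g h x, act (@gmul G g h) x = act g (act h x);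
  act_controlled : forall g U, coarse U -> coarse (rimage (act g) U);
  act_proper : forall g P, born P -> born (fun x => P (act g x));
  inv_cofinal : forall U, coarse U ->
     exists V, coarse V /\ invariant_rel act V /\ rsub U V }.

Arguments car {G} _.
Arguments act {G} _ _ _.
Arguments coarse {G} _ _.
Arguments born {G} _ _.

Definition invariant_set (G : Group) (X : GBC G) (C : X -> Prop) :=
  forall (g : G) x, C x -> C (act X g x).

Definition is_mor (G : Group) (X Y : GBC G) (f : X -> Y) : Prop :=
  (forall (g : G) x, f (act X g x) = act Y g (f x)) /\
  (forall U, coarse X U -> coarse Y (rimage f U)) /\
  (forall P, born Y P -> born X (fun x => P (f x))).

Definition close (G : Group) (X Y : GBC G) (f f' : X -> Y) : Prop :=
  coarse Y (fun y z => exists x, y = f x /\ z = f' x).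

Definition coarse_equiv (G : Group) (X Y : GBC G) (f : X -> Y) : Prop :=
  is_mor f /\ exists h : Y -> X, is_mor h /\
    close (fun x => h (f x)) (fun x => x) /\ close (fun y => f (h y)) (fun y => y).

Section Sub.
Variables (G : Group) (X : GBC G) (Y : X -> Prop) (HY : invariant_set Y).

Definition sub_car := {x : car X | Y x}.
Definition sub_act (g : G) (p : sub_car) : sub_car :=
  exist _ (act X g (proj1_sig p)) (HY g (proj2_sig p)).
Definition sub_coarse (U : rel sub_car) : Prop :=
  exists V, coarse X V /\ forall p q, U p q -> V (proj1_sig p) (proj1_sig q).
Definition sub_born (P : sub_car -> Prop) : Prop :=
  exists Q, born X Q /\ forall p, P p -> Q (proj1_sig p).

Lemma sub_eq (p q : sub_car) : proj1_sig p = proj1_sig q -> p = q.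
Proof.
destruct p as [x hx], q as [y hy]; simpl; intros ->.
f_equal; apply proof_irrelevance.
Qed.

Lemma sub_coarse_ax : is_coarse_structure sub_coarse.
Proof.
pose proof (coarse_ax X) as C.
split.
- exists (@diag X); split; [apply (cs_diag C)|]. intros p q ->; reflexivity.
- intros U V HUV [W [HW HVW]]; exists W; split; auto.
- intros U V [W1 [H1 K1]] [W2 [H2 K2]]; exists (runion W1 W2); split.
  + apply (cs_union C); auto.
  + intros p q [h|h]; [left|right]; auto.
- intros U [W [H K]]; exists (rinv W); split; [apply (cs_inv C); auto|].
  intros p q h; apply K; exact h.
- intros U V [W1 [H1 K1]] [W2 [H2 K2]]; exists (rcomp W1 W2); split.
  + apply (cs_comp C); auto.
  + intros p q [r [h1 h2]]; exists (proj1_sig r); split; [apply K1|apply K2]; assumption.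
Qed.

Lemma sub_born_ax : is_bornology sub_born.
Proof.
pose proof (born_ax X) as B.
split.
- exists (fun _ => False); split; [apply (b_empty B)|]; auto.
- intros p; exists (fun y => y = proj1_sig p); split; [apply (b_pt B)|].
  intros q ->; reflexivity.
- intros P Q HPQ [R [HR K]]; exists R; split; auto.
- intros P Q [R1 [H1 K1]] [R2 [H2 K2]]; exists (fun x => R1 x \/ R2 x); split.
  + apply (b_union B); auto.
  + intros p [h|h]; [left|right]; auto.
Qed.

Lemma sub_compat U P : sub_coarse U -> sub_born P -> sub_born (thicken U P).
Proof.
intros [V [HV KV]] [Q [HQ KQ]]; exists (thicken V Q); split.
- apply compat; auto.
- intros p [c [hc hu]]; exists (proj1_sig c); split; auto.
Qed.

Lemma sub_act_one p : sub_act (@gone G) p = p.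
Proof. apply sub_eq; simpl; apply act_one. Qed.

Lemma sub_act_mul g h p : sub_act (@gmul G g h) p = sub_act g (sub_act h p).
Proof. apply sub_eq; simpl; apply act_mul. Qed.

Lemma sub_act_controlled g U : sub_coarse U -> sub_coarse (rimage (sub_act g) U).
Proof.
intros [V [HV K]]; exists (rimage (act X g) V); split.
- apply act_controlled; auto.
- intros p' q' [p [q [h [<- <-]]]]; exists (proj1_sig p), (proj1_sig q); simpl; auto.
Qed.

Lemma sub_act_proper g P : sub_born P -> sub_born (fun x => P (sub_act g x)).
Proof.
intros [Q [HQ K]]; exists (fun x => Q (act X g x)); split.
- apply act_proper; auto.
- intros p h; exact (K _ h).
Qed.

Lemma sub_inv_cofinal U : sub_coarse U ->
  exists V, sub_coarse V /\ invariant_rel sub_act V /\ rsub U V.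
Proof.
intros [V [HV K]]; destruct (inv_cofinal HV) as [W [HW [IW SW]]].
exists (fun p q => W (proj1_sig p) (proj1_sig q)); split; [|split].
- exists W; split; auto.
- intros g p q h; apply IW; exact h.
- intros p q h; apply SW, K, h.
Qed.

Definition subGBC : GBC G := {|
  car := sub_car; act := sub_act; coarse := sub_coarse; born := sub_born;
  coarse_ax := sub_coarse_ax; born_ax := sub_born_ax; compat := sub_compat;
  act_one := sub_act_one; act_mul := sub_act_mul;
  act_controlled := sub_act_controlled; act_proper := sub_act_proper;
  inv_cofinal := sub_inv_cofinal |}.

End Sub.

Arguments subGBC {G X Y} HY.

Definition incl (G : Group) (X : GBC G) (Y1 Y2 : X -> Prop)
  (H1 : invariant_set Y1) (H2 : invariant_set Y2) (s : forall x, Y1 x -> Y2 x)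
  : subGBC H1 -> subGBC H2 :=
  fun p => exist _ (proj1_sig p) (s _ (proj2_sig p)).

Arguments incl {G X Y1 Y2} H1 H2 s _.

Definition nice (G : Group) (X : GBC G) (C : X -> Prop) : Prop :=
  invariant_set C /\
  forall U, coarse X U -> invariant_rel (act X) U -> rsub (@diag X) U ->
  forall (HC : invariant_set C) (HUC : invariant_set (thicken U C))
         (s : forall x, C x -> thicken U C x),
  coarse_equiv (incl HC HUC s).

Definition is_pushout (G : Group) (X : GBC G) (A B : X -> Prop)
  (HA : invariant_set A) (HB : invariant_set B) (HAB : invariant_set (cap A B)) : Prop :=
  forall (Z : GBC G) (f : subGBC HA -> Z) (g : subGBC HB -> Z),
    is_mor f -> is_mor g ->
    (forall p : subGBC HAB,
       f (incl HAB HA (fun x (H : cap A B x) => proj1 H) p) =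
       g (incl HAB HB (fun x (H : cap A B x) => proj2 H) p)) ->
    exists h : X -> Z, is_mor h /\
      (forall p : subGBC HA, h (proj1_sig p) = f p) /\
      (forall p : subGBC HB, h (proj1_sig p) = g p) /\
      (forall h' : X -> Z, is_mor h' ->
         (forall p : subGBC HA, h' (proj1_sig p) = f p) ->
         (forall p : subGBC HB, h' (proj1_sig p) = g p) ->
         forall x, h' x = h x).

Definition coarsely_excisive (G : Group) (X : GBC G) (A B : X -> Prop) : Prop :=
  invariant_set A /\ invariant_set B /\ (forall x, A x \/ B x) /\
  nice A /\ nice (cap A B) /\
  (forall U, coarse X U -> exists V, coarse X V /\ invariant_rel (act X) V /\
       rsub U V /\ nice (cap (thicken V A) B)) /\
  (forall U, coarse X U -> exists V, coarse X V /\
       forall x, thicken U A x -> thicken U B x -> thicken V (cap A B) x).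

(* Main.v *)
Require Import Defs.
From Stdlib Require Import Arith Lia.

Definition Erel {T} (A B : T -> Prop) (V : rel T) : rel T :=
  fun x y => x = y \/ (V x y /\ A x /\ A y) \/ (V x y /\ B x /\ B y).
Fixpoint rpow {T} (R : rel T) (n : nat) : rel T :=
  match n with 0 => @diag T | S n => rcomp R (rpow R n) end.

Lemma rpow_mono {T} (R S : rel T) n : rsub R S -> rsub (rpow R n) (rpow S n).
Proof.
intros H; induction n; simpl; intros x y; auto.
intros [z [h1 h2]]; exists z; auto.
Qed.

Lemma rpow_add {T} (R : rel T) n m : rsub (rcomp (rpow R n) (rpow R m)) (rpow R (n+m)).
Proof.
induction n; simpl; intros x z [y [h1 h2]].
- unfold diag in h1; subst; auto.
- destruct h1 as [w [h3 h4]]; exists w; split; auto. apply IHn; exists y; auto.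
Qed.

Lemma rpow_diag {T} (R : rel T) n : rsub (@diag T) R -> rsub (@diag T) (rpow R n).
Proof.
intros H; induction n; simpl; intros x y h; auto.
exists x; split; auto. apply H; reflexivity.
Qed.

Lemma rpow_le {T} (R : rel T) n m : rsub (@diag T) R -> rsub (rpow R n) (rpow R (n+m)).
Proof.
intros H x y h; apply rpow_add; exists y; split; auto; apply rpow_diag; auto; reflexivity.
Qed.

Lemma rpow_one {T} (R : rel T) : rsub R (rpow R 1).
Proof. intros x y h; exists y; split; auto; reflexivity. Qed.

Lemma rpow_inv {T} (R Q : rel T) n : rsub (rinv R) Q -> rsub (rinv (rpow R n)) (rpow Q n).
Proof.
intros H; induction n; simpl; intros x y h.
- unfold rinv, diag in *; auto.
- destruct h as [w [h1 h2]].
  change (rpow Q (S n) x y); replace (S n) with (n + 1) by lia; apply rpow_add.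
  exists w; split; [apply IHn; exact h2|]. apply rpow_one, H; exact h1.
Qed.

Lemma rpow_image {T T'} (f : T -> T') (R : rel T) (S : rel T') n :
  (forall x y, R x y -> S (f x) (f y)) -> forall x y, rpow R n x y -> rpow S n (f x) (f y).
Proof.
intros H; induction n; simpl; intros x y h.
- unfold diag in *; subst; reflexivity.
- destruct h as [w [h1 h2]]; exists (f w); auto.
Qed.

Lemma coarse_rpow (G : Group) (X : GBC G) R n : coarse X R -> coarse X (rpow R n).
Proof.
intros H; induction n; simpl.
- apply (cs_diag (coarse_ax X)).
- apply (cs_comp (coarse_ax X)); auto.
Qed.

Lemma Erel_sub {T} (A B : T -> Prop) V : rsub (Erel A B V) (runion (@diag T) V).
Proof. intros x y [h|[h|h]]; [left|right|right]; tauto. Qed.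

Lemma Erel_mono {T} (A B : T -> Prop) V V' : rsub V V' -> rsub (Erel A B V) (Erel A B V').
Proof. intros H x y [h|[h|h]]; unfold Erel; intuition. Qed.

Lemma coarse_union_diag (G : Group) (X : GBC G) V : coarse X V -> coarse X (runion (@diag X) V).
Proof. intros; apply (cs_union (coarse_ax X)); auto; apply (cs_diag (coarse_ax X)). Qed.

Section Z.
Definition Zcoarse {G : Group} {X : GBC G} (A B : X -> Prop) (U : rel X) : Prop :=
  exists V n, coarse X V /\ rsub U (rpow (Erel A B V) n).

Lemma Erel_diag {T} (A B : T -> Prop) V : rsub (@diag T) (Erel A B V).
Proof. intros x y h; left; exact h. Qed.

Lemma Zcoarse_ax (G : Group) (X : GBC G) (A B : X -> Prop) : is_coarse_structure (Zcoarse A B).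
Proof.
split.
- exists (@diag X), 0; split; [apply (cs_diag (coarse_ax X))|]; intros x y h; exact h.
- intros U V HUV [W [n [h1 h2]]]; exists W, n; split; auto; intros x y h; auto.
- intros U V [W1 [n1 [h1 k1]]] [W2 [n2 [h2 k2]]].
  exists (runion W1 W2), (n1 + n2); split; [apply (cs_union (coarse_ax X)); auto|].
  intros x y [h|h].
  + apply rpow_le; [apply Erel_diag|]. eapply rpow_mono; [|apply k1, h].
    apply Erel_mono; intros a b; left; auto.
  + rewrite Nat.add_comm. apply rpow_le; [apply Erel_diag|]. eapply rpow_mono; [|apply k2, h].
    apply Erel_mono; intros a b; right; auto.
- intros U [W [n [h1 k1]]]; exists (rinv W), n; split; [apply (cs_inv (coarse_ax X)); auto|].
  intros x y h. apply (@rpow_inv _ (Erel A B W)); [|apply k1, h].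
  intros a b [e|[e|e]]; unfold Erel, rinv in *; [left; auto|right;left|right;right]; tauto.
- intros U V [W1 [n1 [h1 k1]]] [W2 [n2 [h2 k2]]].
  exists (runion W1 W2), (n1 + n2); split; [apply (cs_union (coarse_ax X)); auto|].
  intros x z [y [a b]]. apply rpow_add. exists y; split.
  + eapply rpow_mono; [|apply k1, a]. apply Erel_mono; intros p q; left; auto.
  + eapply rpow_mono; [|apply k2, b]. apply Erel_mono; intros p q; right; auto.
Qed.

Lemma Zcoarse_X (G : Group) (X : GBC G) (A B : X -> Prop) U : Zcoarse A B U -> coarse X U.
Proof.
intros [V [n [h k]]]. apply (cs_sub (coarse_ax X)) with (rpow (runion (@diag X) V) n).
- intros x y e; eapply rpow_mono; [apply Erel_sub|apply k, e].
- apply coarse_rpow, coarse_union_diag, h.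
Qed.

Lemma Zcompat (G : Group) (X : GBC G) (A B : X -> Prop) U P :
  Zcoarse A B U -> born X P -> born X (thicken U P).
Proof. intros h p; apply compat; auto; eapply Zcoarse_X; eauto. Qed.

Lemma Zcontrolled (G : Group) (X : GBC G) (A B : X -> Prop)
  (HA : invariant_set A) (HB : invariant_set B) g U :
  Zcoarse A B U -> Zcoarse A B (rimage (act X g) U).
Proof.
intros [V [n [h k]]]. exists (rimage (act X g) V), n; split; [apply act_controlled; auto|].
intros x' y' [x [y [e [<- <-]]]]. apply (@rpow_image _ _ _ (Erel A B V)); [|apply k, e].
intros a b [f|[f|f]].
- left; rewrite f; reflexivity.
- right; left; split; [exists a, b; tauto|split; apply HA; tauto].
- right; right; split; [exists a, b; tauto|split; apply HB; tauto].
Qed.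

Lemma Erel_inv (G : Group) (X : GBC G) (A B : X -> Prop)
  (HA : invariant_set A) (HB : invariant_set B) V :
  invariant_rel (act X) V -> forall n, invariant_rel (act X) (rpow (Erel A B V) n).
Proof.
intros IV n; induction n; simpl; intros g x y h.
- unfold diag in *; subst; reflexivity.
- destruct h as [w [h1 h2]]; exists (act X g w); split; auto.
  destruct h1 as [f|[f|f]].
  + left; rewrite f; reflexivity.
  + right; left; split; [apply IV; tauto|split; apply HA; tauto].
  + right; right; split; [apply IV; tauto|split; apply HB; tauto].
Qed.

Lemma Zcofinal (G : Group) (X : GBC G) (A B : X -> Prop)
  (HA : invariant_set A) (HB : invariant_set B) U : Zcoarse A B U ->
  exists V, Zcoarse A B V /\ invariant_rel (act X) V /\ rsub U V.
Proof.
intros [V [n [h k]]]. destruct (inv_cofinal h) as [W [hW [iW sW]]].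
exists (rpow (Erel A B W) n); split; [|split].
- exists W, n; split; auto; intros x y e; auto.
- apply Erel_inv; auto.
- intros x y e; eapply rpow_mono; [apply Erel_mono, sW|apply k, e].
Qed.

Definition ZGBC (G : Group) (X : GBC G) (A B : X -> Prop)
  (HA : invariant_set A) (HB : invariant_set B) : GBC G := {|
  car := car X; act := act X; coarse := Zcoarse A B; born := born X;
  coarse_ax := @Zcoarse_ax G X A B; born_ax := @born_ax G X; compat := @Zcompat G X A B;
  act_one := @act_one G X; act_mul := @act_mul G X;
  act_controlled := @Zcontrolled G X A B HA HB; act_proper := @act_proper G X;
  inv_cofinal := @Zcofinal G X A B HA HB |}.
End Z.

Lemma chain_lemma {T} (A B : T -> Prop) V n : forall a b,
  rpow (Erel A B V) n a b -> A a -> B b ->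
  exists c, A c /\ B c /\ rpow (runion (@diag T) V) n a c.
Proof.
induction n; simpl; intros a b h ha hb.
- unfold diag in h; subst; exists b; repeat split; auto.
- destruct h as [y [h1 h2]]. destruct h1 as [f|[f|f]].
  + unfold diag in f; subst y. destruct (IHn a b h2 ha hb) as [c [? [? ?]]].
    exists c; repeat split; auto; exists a; split; auto; left; reflexivity.
  + destruct (IHn y b h2 (proj2 (proj2 f)) hb) as [c [? [? ?]]].
    exists c; repeat split; auto; exists y; split; auto; right; tauto.
  + exists a; repeat split; try tauto.
    apply (@rpow_diag _ _ (S n)); [intros p q e; left; exact e|reflexivity].
Qed.

Theorem lemma3p7 (G : Group) (X : GBC G) (A B : X -> Prop)
  (HA : invariant_set A) (HB : invariant_set B) (HAB : invariant_set (cap A B))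
  (Hcov : forall x, A x \/ B x)
  (Hpo : is_pushout HA HB HAB)
  (HnA : nice A) (HnAB : nice (cap A B))
  (HnV : forall U, coarse X U -> exists V, coarse X V /\ invariant_rel (act X) V /\
           rsub U V /\ nice (cap (thicken V A) B)) :
  coarsely_excisive A B.
Proof.
split; [auto|split; [auto|split; [auto|split; [auto|split; [auto|split; [auto|]]]]]].
set (Z := @ZGBC G X A B HA HB).
assert (mA : is_mor (X := subGBC HA) (Y := Z) (fun p => proj1_sig p)).
{ split; [intros; reflexivity|split].
  - intros U [W [hW kW]]. exists W, 1; split; auto.
    intros x y [p [q [e [<- <-]]]]. apply rpow_one. right; left.
    split; [apply kW, e|split; [exact (proj2_sig p)|exact (proj2_sig q)]].
  - intros P hP; exists P; split; auto. }
assert (mB : is_mor (X := subGBC HB) (Y := Z) (fun p => proj1_sig p)).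
{ split; [intros; reflexivity|split].
  - intros U [W [hW kW]]. exists W, 1; split; auto.
    intros x y [p [q [e [<- <-]]]]. apply rpow_one. right; right.
    split; [apply kW, e|split; [exact (proj2_sig p)|exact (proj2_sig q)]].
  - intros P hP; exists P; split; auto. }
destruct (Hpo Z _ _ mA mB (fun p => eq_refl)) as [h [[_ [hc _]] [h1 [h2 _]]]].
assert (hid : forall x, h x = x).
{ intros x; destruct (Hcov x) as [a|b].
  - exact (h1 (exist _ x a)).
  - exact (h2 (exist _ x b)). }
intros U HU.
assert (HW : coarse X (rcomp (rinv U) U)).
{ apply (cs_comp (coarse_ax X)); auto; apply (cs_inv (coarse_ax X)); auto. }
destruct (hc _ HW) as [V [n [hV kV]]].
exists (rcomp U (rpow (runion (@diag X) V) n)); split.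
- apply (cs_comp (coarse_ax X)); auto. apply coarse_rpow, coarse_union_diag, hV.
- intros x [a [ha ua]] [b [hb ub]].
  assert (e : rpow (Erel A B V) n a b).
  { apply kV. exists a, b; split; [|split; apply hid]. exists x; split; auto. }
  destruct (chain_lemma A B V n a b e ha hb) as [c [? [? ?]]].
  exists c; split; [split; auto|]. exists a; split; auto.
Qed.
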